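(* Let $(\Omega,\mathcal{F})$ be a measurable space and $\theta:\Omega\to\Omega$ any $\mathcal{F}/\mathcal{F}$-measurable map. Then there exists a subadditive $\theta$-invariant capacity on $\mathcal{F}$ and there exists a superadditive $\theta$-invariant capacity on $\mathcal{F}$. In particular, there exists a $\theta$-invariant capacity on $\mathcal{F}$.
   Context: A capacity is $\mu:\mathcal{F}\to[0,1]$ with $\mu(\emptyset)=0$, $\mu(\Omega)=1$ and $\mu(A)\le\mu(B)$ for $A\subseteq B$. It is subadditive if $\mu(A\cup B)\le\mu(A)+\mu(B)$ for disjoint $A,B$, and superadditive if $\mu(A\cup B)\ge\mu(A)+\mu(B)$ for disjoint $A,B$. It is $\theta$-invariant if $\mu(\theta^{-1}A)=\mu(A)$ for all $A\in\mathcal{F}$. *)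

(* Defs.v *)
From HB Require Import structures.
From mathcomp Require Import all_boot all_order all_algebra.
From mathcomp Require Import all_classical all_reals all_analysis.
Set Implicit Arguments. Unset Strict Implicit. Unset Printing Implicit Defensive.
Import Order.TTheory GRing.Theory Num.Theory.
Local Open Scope classical_set_scope.
Local Open Scope ring_scope.

(* A capacity on the sigma-algebra of T: only its values on measurable sets matter. *)
Definition capacity d (T : measurableType d) (R : realType) (mu : set T -> R) :=
  [/\ mu set0 = 0, mu setT = 1,
      (forall A, measurable A -> 0 <= mu A /\ mu A <= 1) &
      (forall A B, measurable A -> measurable B -> A `<=` B -> mu A <= mu B)].

Definition cap_subadditive d (T : measurableType d) (R : realType) (mu : set T -> R) :=
  forall A B, measurable A -> measurable B -> A `&` B = set0 ->
    mu (A `|` B) <= mu A + mu B.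

Definition cap_superadditive d (T : measurableType d) (R : realType) (mu : set T -> R) :=
  forall A B, measurable A -> measurable B -> A `&` B = set0 ->
    mu A + mu B <= mu (A `|` B).

Definition cap_invariant d (T : measurableType d) (R : realType)
  (theta : T -> T) (mu : set T -> R) :=
  forall A, measurable A -> mu (theta @^-1` A) = mu A.

(* Main.v *)
Require Import Defs.
From mathcomp Require Import all_boot all_order all_algebra.
From mathcomp Require Import all_classical all_reals all_analysis.
Import Order.TTheory GRing.Theory Num.Theory.
Local Open Scope classical_set_scope.
Local Open Scope ring_scope.

Section Aux.
Variables (R : realType) (d : measure_display) (T : measurableType d) (theta : T -> T).

Definition ind (P : set T -> Prop) (A : set T) : R := if `[< P A >] then 1 else 0.

Lemma ind_cap (P : set T -> Prop) :
  (forall A B, A `<=` B -> P A -> P B) -> ~ P set0 -> P setT ->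
  (forall A, P (theta @^-1` A) <-> P A) ->
  capacity (ind P) /\ cap_invariant theta (ind P).
Proof.
move=> mon n0 pT inv; split; first split.
- by rewrite /ind; case: asboolP.
- by rewrite /ind; case: asboolP.
- by move=> A _; rewrite /ind; case: asboolP => _; rewrite ?lexx ?ler01.
- move=> A B _ _ AB; rewrite /ind; case: asboolP => [PA|_]; case: asboolP => //.
  by move=> nB; exfalso; apply: nB; exact: mon PA.
- by move=> A _; rewrite /ind; case: asboolP => H1; case: asboolP => H2 //;
    exfalso; [apply: H2; apply/inv | apply: H1; apply/inv].
Qed.

Definition Pio (A : set T) := exists x, forall N, exists2 n, (N <= n)%N & A (iter n theta x).
Definition Pev (A : set T) := forall x, exists N, forall n, (N <= n)%N -> A (iter n theta x).

Lemma Pio_props :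
  [/\ (forall A B, A `<=` B -> Pio A -> Pio B), ~ Pio set0, Pio setT &
  (forall A, Pio (theta @^-1` A) <-> Pio A)].
Proof.
split.
- move=> A B AB [x Hx]; exists x => N; have [n Nn An] := Hx N; exists n => //; exact: AB.
- by move=> [x /(_ 0%N) [n _ []]].
- by exists point => N; exists N.
- move=> A; split => -[x Hx].
  + exists x => N; have [n Nn An] := Hx N; exists n.+1; first exact: leqW.
    by rewrite iterS.
  + exists x => N; have [n Nn An] := Hx N.+1; exists n.-1; first by rewrite -ltnS prednK // (leq_ltn_trans _ Nn).
    by rewrite /preimage /= -iterS prednK // (leq_ltn_trans _ Nn).
Qed.

Lemma Pev_props :
  [/\ (forall A B, A `<=` B -> Pev A -> Pev B), ~ Pev set0, Pev setT &
  (forall A, Pev (theta @^-1` A) <-> Pev A)].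
Proof.
split.
- move=> A B AB H x; have [N HN] := H x; exists N => n Nn; exact/AB/HN.
- by move=> /(_ point) [N /(_ N (leqnn N))].
- by move=> x; exists 0%N.
- move=> A; split => H x.
  + have [N HN] := H x; exists N.+1 => n Nn.
    by rewrite -(prednK (leq_ltn_trans (leq0n N) Nn)) iterS; apply: HN; rewrite -ltnS prednK // (leq_ltn_trans _ Nn).
  + have [N HN] := H x; exists N => n Nn; rewrite /preimage /= -iterS; apply: HN; exact: leqW.
Qed.
End Aux.

Arguments ind {R d T}.
Arguments Pio {d T}.
Arguments Pev {d T}.
Theorem proposition4 (R : realType) (d : measure_display) (T : measurableType d)
  (theta : T -> T) (mtheta : measurable_fun setT theta) :
  (exists mu : set T -> R, [/\ capacity mu, cap_subadditive mu & cap_invariant theta mu]) /\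
  (exists mu : set T -> R, [/\ capacity mu, cap_superadditive mu & cap_invariant theta mu]) /\
  (exists mu : set T -> R, capacity mu /\ cap_invariant theta mu).
Proof.
have [m1 n1 t1 i1] := Pio_props _ _ theta.
have [m2 n2 t2 i2] := Pev_props _ _ theta.
have [c1 v1] := ind_cap R _ _ theta _ m1 n1 t1 i1.
have [c2 v2] := ind_cap R _ _ theta _ m2 n2 t2 i2.
split; last split; last by exists (ind (Pio theta)).
- exists (ind (Pio theta)); split => // A B _ _ _; rewrite /ind.
  case: asboolP => [[x Hx]|_]; last by case: asboolP => _; case: asboolP => _;
    rewrite ?addr0 ?add0r ?ler01 ?lexx // -[0]addr0 lerD ?ler01.
  case: asboolP => HA; case: asboolP => HB; rewrite ?addr0 ?add0r ?lexx //.
  + by rewrite lerDl ler01.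
  + exfalso.
    have [NA hA] : exists NA, forall n, (NA <= n)%N -> ~ A (iter n theta x).
      apply: contrapT => H; apply: HA; exists x => N; apply: contrapT => H2; apply: H; exists N => n Nn An; apply: H2; by exists n.
    have [NB hB] : exists NB, forall n, (NB <= n)%N -> ~ B (iter n theta x).
      apply: contrapT => H; apply: HB; exists x => N; apply: contrapT => H2; apply: H; exists N => n Nn An; apply: H2; by exists n.
    have [n Nn [An|Bn]] := Hx (maxn NA NB).
    * by apply: (hA n) => //; exact: leq_trans (leq_maxl _ _) Nn.
    * by apply: (hB n) => //; exact: leq_trans (leq_maxr _ _) Nn.
- exists (ind (Pev theta)); split => // A B mA mB AB0.
  have [_ _ _ mon] := c2.
  have mU : measurable (A `|` B) by exact: measurableU.
  rewrite /ind; case: asboolP => HA; case: asboolP => HB.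
  + exfalso; have [NA hA] := HA point; have [NB hB] := HB point.
    have : (A `&` B) (iter (maxn NA NB) theta point).
      by split; [apply: hA; exact: leq_maxl | apply: hB; exact: leq_maxr].
    by rewrite AB0.
  + rewrite addr0; have := mon A (A `|` B) mA mU (@subsetUl _ A B).
    by rewrite /ind; case: asboolP => // _; case: asboolP.
  + rewrite add0r; have := mon B (A `|` B) mB mU (@subsetUr _ A B).
    by rewrite /ind; case: asboolP => // _; case: asboolP.
  + by rewrite addr0; case: asboolP => _; rewrite ?ler01.
Qed.
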